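(* Let $\ell$ be a prime and $n$ a positive integer. Suppose that $\mathcal{O}$ is an imaginary quadratic order of conductor coprime to $\ell$ in which $\ell$ splits into two distinct prime ideals whose classes have order $n$ in $\mathrm{Cl}(\mathcal{O})$. Then the discriminant $D(\mathcal{O})$ of $\mathcal{O}$ satisfies $|D(\mathcal{O})|\le 4\ell^n-1$.
   Context: $\mathrm{Cl}(\mathcal{O})$ denotes the class group (of invertible ideals) of the order $\mathcal{O}$. *)

(* Defs.v *)
From Stdlib Require Export ZArith Znumtheory.
Open Scope Z_scope.

Definition is_disc (d : Z) : Prop := d mod 4 = 0 \/ d mod 4 = 1.

(* The imaginary quadratic order of discriminant D (D < 0, is_disc D) is
   O_D = Z[tau], tau = (D + sqrt D)/2, tau^2 = D*tau + (D - D^2)/4.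
   An element a + b*tau is represented by the pair (a, b). *)
Definition qelt := (Z * Z)%type.

Definition qmul (D : Z) (x y : qelt) : qelt :=
  let (a, b) := x in let (c, d) := y in
  (a * c + b * d * ((D - D * D) / 4), a * d + b * c + b * d * D).

Definition qadd (x y : qelt) : qelt := (fst x + fst y, snd x + snd y).

Definition qzero : qelt := (0, 0).
Definition qone : qelt := (1, 0).

(* Conductor: the largest f > 0 with f^2 | D and D / f^2 a discriminant
   (so D = f^2 d_K with d_K the fundamental discriminant). *)
Definition is_conductor (D f : Z) : Prop :=
  0 < f /\ (f * f | D) /\ is_disc (D / (f * f)) /\
  forall g, 0 < g -> (g * g | D) -> is_disc (D / (g * g)) -> g <= f.

Definition ideal := qelt -> Prop.

Definition is_ideal (D : Z) (I : ideal) : Prop :=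
  I qzero /\ (forall x y, I x -> I y -> I (qadd x y)) /\
  (forall r x, I x -> I (qmul D r x)).

Definition ideal_eq (I J : ideal) : Prop := forall x, I x <-> J x.

Definition is_prime_ideal (D : Z) (P : ideal) : Prop :=
  is_ideal D P /\ ~ P qone /\ (exists x, P x /\ x <> qzero) /\
  forall a b, P (qmul D a b) -> P a \/ P b.

Definition unit_ideal : ideal := fun _ => True.
Definition pideal (D : Z) (alpha : qelt) : ideal :=
  fun x => exists r, x = qmul D r alpha.

Definition iprod (D : Z) (I J : ideal) : ideal :=
  fun x => forall K, is_ideal D K ->
    (forall i j, I i -> J j -> K (qmul D i j)) -> K x.

Fixpoint ipow (D : Z) (I : ideal) (k : nat) : ideal :=
  match k with
  | O => unit_ideal
  | S k' => iprod D (ipow D I k') I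
  end.

Definition iscale (D : Z) (alpha : qelt) (I : ideal) : ideal :=
  fun x => exists i, I i /\ x = qmul D alpha i.

Definition same_class (D : Z) (I J : ideal) : Prop :=
  exists alpha beta, alpha <> qzero /\ beta <> qzero /\
    ideal_eq (iscale D alpha I) (iscale D beta J).

Definition class_order (D : Z) (I : ideal) (n : nat) : Prop :=
  (0 < n)%nat /\ same_class D (ipow D I n) unit_ideal /\
  forall k, (0 < k < n)%nat -> ~ same_class D (ipow D I k) unit_ideal.

(* Main.v *)
Require Import Defs.
From Stdlib Require Import ZArith Znumtheory Zpow_facts Lia Psatz.
Open Scope Z_scope.

Definition qopp (x : qelt) : qelt := (- fst x, - snd x).
Definition qnorm (D : Z) (x : qelt) : Z :=
  let (a, b) := x in a * a + a * b * D - b * b * ((D - D * D) / 4).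

Ltac qdes := repeat match goal with
  | x : qelt |- _ => destruct x
  end; cbv [qmul qadd qopp qnorm qzero qone fst snd] in *.

Lemma qmul_comm D x y : qmul D x y = qmul D y x.
Proof. qdes. f_equal; ring. Qed.
Lemma qmul_assoc D x y z : qmul D x (qmul D y z) = qmul D (qmul D x y) z.
Proof. qdes. remember ((D - D*D)/4) as c. f_equal; ring. Qed.
Lemma qmul_addr D x y z : qmul D x (qadd y z) = qadd (qmul D x y) (qmul D x z).
Proof. qdes. f_equal; ring. Qed.
Lemma qmul_addl D x y z : qmul D (qadd y z) x = qadd (qmul D y x) (qmul D z x).
Proof. qdes. f_equal; ring. Qed.
Lemma qmul_1l D x : qmul D qone x = x.
Proof. qdes. f_equal; ring. Qed.
Lemma qmul_1r D x : qmul D x qone = x.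
Proof. qdes. f_equal; ring. Qed.
Lemma qmul_0l D x : qmul D qzero x = qzero.
Proof. qdes. f_equal; ring. Qed.
Lemma qmul_0r D x : qmul D x qzero = qzero.
Proof. qdes. f_equal; ring. Qed.
Lemma qmul_oppl D x y : qmul D (qopp x) y = qopp (qmul D x y).
Proof. qdes. f_equal; ring. Qed.
Lemma qmul_oppr D x y : qmul D x (qopp y) = qopp (qmul D x y).
Proof. qdes. f_equal; ring. Qed.
Lemma qnorm_mul D x y : qnorm D (qmul D x y) = qnorm D x * qnorm D y.
Proof. qdes. remember ((D - D*D)/4) as c. ring. Qed.

Lemma c_spec D : is_disc D -> 4 * ((D - D * D) / 4) = D - D * D.
Proof.
  intros H. pose proof (Z.div_mod D 4 ltac:(lia)) as E.
  set (q := D / 4) in *. set (r := D mod 4) in *.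
  assert (D - D * D = (q - 4*q*q - 2*q*r) * 4) as E2.
  { unfold is_disc in H. fold r in H. destruct H as [H|H]; rewrite E, H; ring. }
  rewrite E2, Z_div_mult by lia. ring.
Qed.

Lemma qnorm4 D x : is_disc D -> 4 * qnorm D x = (2 * fst x + snd x * D)^2 - (snd x)^2 * D.
Proof. intros H. pose proof (c_spec D H). qdes. remember ((D - D*D)/4) as c. nia. Qed.

Lemma qnorm_nonneg D x : is_disc D -> D < 0 -> 0 <= qnorm D x.
Proof. intros H HD. pose proof (qnorm4 D x H). nia. Qed.

Lemma qnorm_zero D x : is_disc D -> D < 0 -> qnorm D x = 0 -> x = qzero.
Proof.
  intros H HD E. pose proof (qnorm4 D x H). rewrite E in H0.
  destruct x as [a b]; simpl in *.
  assert (b = 0) by nia. subst. assert (a = 0) by nia. subst. reflexivity.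
Qed.

Lemma qdomain D x y : is_disc D -> D < 0 -> qmul D x y = qzero -> x = qzero \/ y = qzero.
Proof.
  intros H HD E. assert (qnorm D x * qnorm D y = 0).
  { rewrite <- qnorm_mul, E. reflexivity. }
  apply Z.mul_eq_0 in H0. destruct H0; [left|right]; eapply qnorm_zero; eauto.
Qed.

Lemma qcancel D a x y : is_disc D -> D < 0 -> a <> qzero -> qmul D a x = qmul D a y -> x = y.
Proof.
  intros H HD Ha E.
  assert (qmul D a (qadd x (qopp y)) = qzero).
  { rewrite qmul_addr, qmul_oppr, E. qdes. f_equal; ring. }
  destruct (qdomain D _ _ H HD H0). contradiction.
  qdes. inversion H1. f_equal; lia.
Qed.

Definition isub (I J : ideal) : Prop := forall x, I x -> J x.

Lemma ieq_sub I J : ideal_eq I J -> isub I J /\ isub J I.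
Proof. unfold ideal_eq, isub; firstorder. Qed.
Lemma sub_ieq I J : isub I J -> isub J I -> ideal_eq I J.
Proof. unfold ideal_eq, isub; firstorder. Qed.
Lemma ieq_refl I : ideal_eq I I.
Proof. unfold ideal_eq; tauto. Qed.
Lemma ieq_sym I J : ideal_eq I J -> ideal_eq J I.
Proof. unfold ideal_eq; firstorder. Qed.
Lemma ieq_trans I J K : ideal_eq I J -> ideal_eq J K -> ideal_eq I K.
Proof. unfold ideal_eq; firstorder. Qed.

Lemma iprod_ideal D I J : is_ideal D (iprod D I J).
Proof.
  unfold is_ideal, iprod. split; [|split].
  - intros K HK _. destruct HK as [? [? ?]]; auto.
  - intros x y Hx Hy K HK Hp. apply (proj1 (proj2 HK)); [apply Hx|apply Hy]; auto.
  - intros r x Hx K HK Hp. apply (proj2 (proj2 HK)); apply Hx; auto.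
Qed.

Lemma iprod_mem D (I J : ideal) i j : I i -> J j -> iprod D I J (qmul D i j).
Proof. intros Hi Hj K HK Hp. auto. Qed.

Lemma iprod_min D (I J K : ideal) : is_ideal D K ->
  (forall i j, I i -> J j -> K (qmul D i j)) -> isub (iprod D I J) K.
Proof. intros HK Hp x Hx. apply Hx; auto. Qed.

Lemma iprod_comm D I J : isub (iprod D I J) (iprod D J I).
Proof.
  apply iprod_min. apply iprod_ideal. intros i j Hi Hj.
  rewrite qmul_comm. apply iprod_mem; auto.
Qed.

Lemma iprod_comm_eq D I J : ideal_eq (iprod D I J) (iprod D J I).
Proof. apply sub_ieq; apply iprod_comm. Qed.

Lemma iprod_mono D I J I' J' : isub I I' -> isub J J' ->
  isub (iprod D I J) (iprod D I' J').
Proof.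
  intros H1 H2. apply iprod_min. apply iprod_ideal. intros i j Hi Hj.
  apply iprod_mem; auto.
Qed.

Lemma iprod_eq D I J I' J' : ideal_eq I I' -> ideal_eq J J' ->
  ideal_eq (iprod D I J) (iprod D I' J').
Proof.
  intros H1 H2. apply ieq_sub in H1. apply ieq_sub in H2.
  apply sub_ieq; apply iprod_mono; tauto.
Qed.

Lemma iprod_assoc1 D I J K :
  isub (iprod D (iprod D I J) K) (iprod D I (iprod D J K)).
Proof.
  apply iprod_min. apply iprod_ideal. intros x k Hx Hk.
  set (S := fun y => iprod D I (iprod D J K) (qmul D y k)).
  assert (HS : is_ideal D S).
  { unfold S. destruct (iprod_ideal D I (iprod D J K)) as [h0 [h1 h2]].
    split; [|split].
    - rewrite qmul_0l. apply h0.
    - intros a b Ha Hb. rewrite qmul_addl. auto.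
    - intros r a Ha. rewrite <- qmul_assoc. auto. }
  apply (iprod_min D I J S HS); auto.
  intros i j Hi Hj. unfold S. rewrite <- qmul_assoc.
  apply iprod_mem; auto. apply iprod_mem; auto.
Qed.

Lemma iprod_assoc D I J K :
  ideal_eq (iprod D (iprod D I J) K) (iprod D I (iprod D J K)).
Proof.
  apply sub_ieq. apply iprod_assoc1.
  intros x Hx.
  apply iprod_comm in Hx. apply iprod_assoc1 in Hx. apply iprod_comm in Hx.
  apply iprod_assoc1 in Hx. apply iprod_comm in Hx. exact Hx.
Qed.

Lemma unit_ideal_ideal D : is_ideal D unit_ideal.
Proof. unfold is_ideal, unit_ideal; auto. Qed.

Lemma iprod_sub_r D I J : is_ideal D J -> isub (iprod D I J) J.
Proof.
  intros HJ. apply iprod_min; auto. intros i j Hi Hj. apply HJ; auto.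
Qed.
Lemma iprod_sub_l D I J : is_ideal D I -> isub (iprod D I J) I.
Proof.
  intros HI x Hx. apply iprod_comm in Hx. eapply iprod_sub_r; eauto.
Qed.

Lemma iprod_unit D I : is_ideal D I -> ideal_eq (iprod D I unit_ideal) I.
Proof.
  intros HI. apply sub_ieq. apply iprod_sub_l; auto.
  intros x Hx. rewrite <- (qmul_1r D x). apply iprod_mem; auto. exact Logic.I.
Qed.

Lemma pideal_ideal D a : is_ideal D (pideal D a).
Proof.
  unfold is_ideal, pideal. split; [|split].
  - exists qzero. rewrite qmul_0l. reflexivity.
  - intros x y [r Hr] [s Hs]. exists (qadd r s). subst. rewrite qmul_addl. auto.
  - intros r x [s Hs]. exists (qmul D r s). subst. apply qmul_assoc.
Qed.

Lemma pideal_self D a : pideal D a a.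
Proof. exists qone. rewrite qmul_1l. auto. Qed.

Lemma pideal_mul D a b : ideal_eq (iprod D (pideal D a) (pideal D b)) (pideal D (qmul D a b)).
Proof.
  apply sub_ieq.
  - apply iprod_min. apply pideal_ideal. intros i j [r Hr] [s Hs]. subst.
    exists (qmul D r s). rewrite <- !qmul_assoc. f_equal.
    rewrite (qmul_comm D a (qmul D s b)), <- qmul_assoc. f_equal. apply qmul_comm.
  - intros x [r Hr]. subst. rewrite qmul_assoc. apply iprod_mem.
    exists r; auto. apply pideal_self.
Qed.

Lemma pideal_one D : ideal_eq (pideal D qone) unit_ideal.
Proof. apply sub_ieq. intros x _; exact Logic.I. intros x _. exists x. rewrite qmul_1r; auto. Qed.

Lemma ipow_ideal D I k : is_ideal D (ipow D I k).
Proof. destruct k; simpl. apply unit_ideal_ideal. apply iprod_ideal. Qed.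

Lemma ipow_eq D I J k : ideal_eq I J -> ideal_eq (ipow D I k) (ipow D J k).
Proof.
  intros H. induction k; simpl. apply ieq_refl. apply iprod_eq; auto.
Qed.

Lemma ipow_add D I j k : ideal_eq (ipow D I (j + k)) (iprod D (ipow D I j) (ipow D I k)).
Proof.
  induction k.
  - rewrite Nat.add_0_r. simpl. apply ieq_sym, iprod_unit, ipow_ideal.
  - rewrite Nat.add_succ_r. simpl. eapply ieq_trans.
    apply iprod_eq. apply IHk. apply ieq_refl. apply iprod_assoc.
Qed.

Lemma ipow_distr D I J k : ideal_eq (ipow D (iprod D I J) k) (iprod D (ipow D I k) (ipow D J k)).
Proof.
  induction k; simpl.
  - apply ieq_sym, iprod_unit, unit_ideal_ideal.
  - eapply ieq_trans. apply iprod_eq. apply IHk. apply ieq_refl.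
    set (A := ipow D I k). set (B := ipow D J k).
    (* (A B)(I J) = (A I)(B J) *)
    eapply ieq_trans. apply iprod_assoc.
    eapply ieq_trans. apply iprod_eq. apply ieq_refl. apply ieq_sym, iprod_assoc.
    eapply ieq_trans. apply iprod_eq. apply ieq_refl. apply iprod_eq. apply iprod_comm_eq. apply ieq_refl.
    eapply ieq_trans. apply iprod_eq. apply ieq_refl. apply iprod_assoc.
    apply ieq_sym, iprod_assoc.
Qed.

Fixpoint qpow (D : Z) (x : qelt) (k : nat) : qelt :=
  match k with O => qone | S k' => qmul D (qpow D x k') x end.

Lemma ipow_pideal D a k : ideal_eq (ipow D (pideal D a) k) (pideal D (qpow D a k)).
Proof.
  induction k; simpl. apply ieq_sym, pideal_one.
  eapply ieq_trans. apply iprod_eq. apply IHk. apply ieq_refl. apply pideal_mul.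
Qed.

Lemma qpow_mem D I x k : I x -> ipow D I k (qpow D x k).
Proof.
  intros H. induction k; simpl. exact Logic.I. apply iprod_mem; auto.
Qed.

Lemma prime_pow D P x k : is_prime_ideal D P -> P (qpow D x k) -> (0 < k)%nat -> P x.
Proof.
  intros HP. destruct HP as [_ [H1 [_ Hpr]]]. induction k; intros H Hk. lia.
  simpl in H. destruct (Hpr _ _ H); auto.
  destruct k. simpl in H0. contradiction. apply IHk; auto; lia.
Qed.

Definition cscale (D : Z) (c : qelt) (X : ideal) : ideal :=
  fun z => exists x, X x /\ z = qmul D c x.

Lemma cscale_ideal D c X : is_ideal D X -> is_ideal D (cscale D c X).
Proof.
  intros [h0 [h1 h2]]. unfold cscale. split; [|split].
  - exists qzero. rewrite qmul_0r. auto.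
  - intros x y [a [Ha ->]] [b [Hb ->]]. exists (qadd a b). rewrite qmul_addr. auto.
  - intros r x [a [Ha ->]]. exists (qmul D r a). split; auto.
    rewrite !qmul_assoc, (qmul_comm D r c). auto.
Qed.

Lemma pscale D c X : is_ideal D X -> ideal_eq (iprod D (pideal D c) X) (cscale D c X).
Proof.
  intros HX. apply sub_ieq.
  - apply iprod_min. apply cscale_ideal; auto.
    intros i j [r ->] Hj. exists (qmul D r j). split. apply HX; auto.
    rewrite !qmul_assoc, (qmul_comm D r c). auto.
  - intros z [x [Hx ->]]. apply iprod_mem; auto. apply pideal_self.
Qed.

Lemma cancel_sub D A B X Y c : is_disc D -> D < 0 -> c <> qzero ->
  ideal_eq (iprod D A B) (pideal D c) -> is_ideal D X -> is_ideal D Y ->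
  ideal_eq (iprod D A X) (iprod D A Y) -> isub X Y.
Proof.
  intros Hd HD Hc HAB HX HY HE.
  assert (forall Z, is_ideal D Z -> ideal_eq (iprod D B (iprod D A Z)) (cscale D c Z)) as K.
  { intros Z HZ. eapply ieq_trans. apply ieq_sym, iprod_assoc.
    eapply ieq_trans. apply iprod_eq. apply iprod_comm_eq. apply ieq_refl.
    eapply ieq_trans. apply iprod_eq. apply HAB. apply ieq_refl.
    apply pscale; auto. }
  assert (ideal_eq (cscale D c X) (cscale D c Y)) as E.
  { eapply ieq_trans. apply ieq_sym, K; auto.
    eapply ieq_trans. apply iprod_eq. apply ieq_refl. apply HE. apply K; auto. }
  intros x Hx. destruct (proj1 (E (qmul D c x))) as [y [Hy Ey]].
  exists x; auto. apply qcancel in Ey; auto. subst; auto.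
Qed.

Lemma cancel_eq D A B X Y c : is_disc D -> D < 0 -> c <> qzero ->
  ideal_eq (iprod D A B) (pideal D c) -> is_ideal D X -> is_ideal D Y ->
  ideal_eq (iprod D A X) (iprod D A Y) -> ideal_eq X Y.
Proof.
  intros. apply sub_ieq; eapply cancel_sub; eauto. apply ieq_sym; auto.
Qed.

Lemma principal D I : is_disc D -> D < 0 -> is_ideal D I -> same_class D I unit_ideal ->
  exists p, ideal_eq I (pideal D p).
Proof.
  intros Hd HD HI [al [be [Ha [Hb E]]]].
  destruct (proj2 (E be)) as [p [Hp Ep]]. exists qone. split. exact Logic.I. symmetry; apply qmul_1r.
  exists p. apply sub_ieq.
  - intros x Hx. destruct (proj1 (E (qmul D al x))) as [u [_ Eu]]. exists x; auto.
    rewrite Ep, <- qmul_assoc in Eu. apply qcancel in Eu; auto. exists u. rewrite Eu. apply qmul_comm.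
  - intros x [r ->]. apply HI; auto.
Qed.

Lemma qpow_int D l j : qpow D (l, 0) j = (l ^ Z.of_nat j, 0).
Proof.
  induction j; cbn [qpow]. reflexivity. rewrite IHj. cbv [qmul].
  rewrite Nat2Z.inj_succ, Z.pow_succ_r by lia. f_equal; ring.
Qed.

Lemma ipow_sub D P m : is_ideal D P -> (0 < m)%nat -> isub (ipow D P m) P.
Proof. intros HP Hm. destruct m. lia. simpl. apply iprod_sub_r; auto. Qed.

Lemma lemX D l P Q m j : is_disc D -> D < 0 -> l <> 0 ->
  is_prime_ideal D P -> is_prime_ideal D Q -> ~ ideal_eq P Q ->
  ideal_eq (pideal D (l, 0)) (iprod D P Q) -> (0 < m)%nat ->
  ideal_eq (ipow D P m) (pideal D (qpow D (l, 0) j)) -> False.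
Proof.
  intros Hd HD Hl HP HQ HPQ E Hm Hj.
  assert (PQ : forall i, ideal_eq (iprod D (ipow D P i) (ipow D Q i)) (pideal D (qpow D (l, 0) i))).
  { intros i. eapply ieq_trans. apply ieq_sym, ipow_distr.
    eapply ieq_trans. apply ipow_eq. apply ieq_sym, E. apply ipow_pideal. }
  assert (NZ : forall i, qpow D (l, 0) i <> qzero).
  { intros i. rewrite qpow_int. intros H. inversion H. apply Z.pow_nonzero in H1; auto. lia. }
  assert (IP : is_ideal D P) by apply HP. assert (IQ : is_ideal D Q) by apply HQ.
  assert (NU : forall R t, is_prime_ideal D R -> (0 < t)%nat -> ideal_eq (ipow D R t) unit_ideal -> False).
  { intros R t HR Ht Hu. destruct HR as [HR [H1 _]]. apply H1.
    apply (ipow_sub D R t HR Ht). apply Hu. exact Logic.I. }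
  destruct (Nat.le_gt_cases m j) as [Hle|Hlt].
  - destruct (Nat.le_exists_sub m j Hle) as [t [Et _]]. rewrite Nat.add_comm in Et. subst j.
    assert (ideal_eq (iprod D (ipow D P m) (iprod D (ipow D P t) (ipow D Q (m + t))))
                     (iprod D (ipow D P m) unit_ideal)) as E1.
    { eapply ieq_trans. apply ieq_sym, iprod_assoc.
      eapply ieq_trans. apply iprod_eq. apply ieq_sym, ipow_add. apply ieq_refl.
      eapply ieq_trans. apply PQ. eapply ieq_trans. apply ieq_sym, Hj.
      apply ieq_sym, iprod_unit, ipow_ideal. }
    apply cancel_eq with (B := ipow D Q m) (c := qpow D (l,0) m) in E1; auto.
    2: apply iprod_ideal. 2: apply unit_ideal_ideal.
    apply (NU Q (m + t)%nat HQ). lia.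
    apply sub_ieq. intros x _; exact Logic.I.
    intros x _. apply (iprod_sub_r D (ipow D P t)). apply ipow_ideal. apply E1. exact Logic.I.
  - destruct (Nat.le_exists_sub j m (Nat.lt_le_incl _ _ Hlt)) as [t [Et _]]. subst m. rewrite Nat.add_comm in Hj.
    assert (ideal_eq (iprod D (ipow D P j) (ipow D P t)) (iprod D (ipow D P j) (ipow D Q j))) as E1.
    { eapply ieq_trans. apply ieq_sym. apply ipow_add.
      eapply ieq_trans. apply Hj. apply ieq_sym, PQ. }
    apply cancel_eq with (B := ipow D Q j) (c := qpow D (l,0) j) in E1; auto.
    2: apply ipow_ideal. 2: apply ipow_ideal.
    destruct j as [|j'].
    + simpl in E1. apply (NU P t HP). lia. auto.
    + apply HPQ. apply sub_ieq.
      * intros x Hx. apply (prime_pow D Q x t HQ); [|lia]. apply (ipow_sub D Q (S j') IQ). lia. apply E1. apply qpow_mem; auto.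
      * intros x Hx. apply (prime_pow D P x (S j') HP); [|lia].
        apply (ipow_sub D P t IP). lia. apply E1. apply qpow_mem; auto.
Qed.

Lemma pideal_opp D x : ideal_eq (pideal D (qopp x)) (pideal D x).
Proof.
  apply sub_ieq; intros z [r ->].
  - exists (qopp r). qdes. f_equal; ring.
  - exists (qopp r). qdes. f_equal; ring.
Qed.

Lemma pideal_norm D a b : is_disc D -> D < 0 -> ideal_eq (pideal D a) (pideal D b) ->
  qnorm D a = qnorm D b.
Proof.
  intros Hd HD E.
  destruct (proj1 (E a) (pideal_self D a)) as [r Er].
  destruct (proj2 (E b) (pideal_self D b)) as [s Es].
  assert (qnorm D a = qnorm D r * qnorm D b) by (rewrite Er; apply qnorm_mul).
  assert (qnorm D b = qnorm D s * qnorm D a) by (rewrite Es; apply qnorm_mul).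
  pose proof (qnorm_nonneg D r Hd HD). pose proof (qnorm_nonneg D s Hd HD).
  pose proof (qnorm_nonneg D a Hd HD).
  destruct (Z.eq_dec (qnorm D a) 0) as [Z0|Z0].
  - rewrite Z0 in *. lia.
  - assert (qnorm D r * qnorm D s = 1).
    { apply (Z.mul_cancel_r _ _ (qnorm D a)); auto.
      rewrite H0 in H. rewrite H at 2. ring. }
    apply Z.eq_mul_1_nonneg in H4; auto. destruct H4 as [H4 _]. rewrite H4 in H. lia.
Qed.

Lemma Lmain l n D P Q p : prime l -> (0 < n)%nat -> D < 0 -> is_disc D ->
  is_prime_ideal D P -> is_prime_ideal D Q -> ~ ideal_eq P Q ->
  ideal_eq (pideal D (l, 0)) (iprod D P Q) ->
  ideal_eq (ipow D P n) (pideal D p) ->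
  qnorm D p <= l ^ Z.of_nat n ->
  Z.abs D <= 4 * l ^ (Z.of_nat n) - 1.
Proof.
  intros Hl Hn HD Hd HP HQ HPQ E Hp HN.
  pose proof (prime_ge_2 l Hl) as Hl2.
  assert (Hl0 : l <> 0) by lia.
  set (L := l ^ Z.of_nat n) in *.
  assert (HL : 0 < L) by (apply Z.pow_pos_nonneg; lia).
  assert (PQ : ideal_eq (iprod D (ipow D P n) (ipow D Q n)) (pideal D (L, 0))).
  { eapply ieq_trans. apply ieq_sym, ipow_distr.
    eapply ieq_trans. apply ipow_eq. apply ieq_sym, E. eapply ieq_trans. apply ipow_pideal.
    rewrite qpow_int. apply ieq_refl. }
  rewrite Z.abs_neq by lia.
  destruct p as [a b].
  destruct (Z.eq_dec b 0) as [Hb|Hb].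
  - subst b. exfalso.
    assert (pideal D (a, 0) (L, 0)) as HLa.
    { apply Hp. apply (iprod_sub_l D _ (ipow D Q n)). apply ipow_ideal. apply PQ. apply pideal_self. }
    destruct HLa as [[r1 r2] Er]. cbv [qmul] in Er. injection Er as Er1 Er2.
    assert (Hdiv : (Z.abs a | l ^ Z.of_nat n)).
    { fold L. rewrite Er1. apply Z.divide_abs_l. exists r1. ring. }
    destruct (Zdivide_power_2 (Z.abs a) l (Z.of_nat n)) as [m Hm]; auto; try lia.
    destruct (Z.lt_ge_cases m 0) as [Hm0|Hm0].
    { rewrite Z.pow_neg_r in Hm by auto. assert (a = 0) by lia. subst a. lia. }
    apply (lemX D l P Q n (Z.to_nat m)); auto.
    eapply ieq_trans. apply Hp. rewrite qpow_int, Z2Nat.id by lia.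
    destruct (Z.abs_spec a) as [[_ Ha]|[_ Ha]]; rewrite Ha in Hm.
    + rewrite Hm. apply ieq_refl.
    + replace (a, 0) with (qopp (l ^ m, 0)). apply pideal_opp.
      unfold qopp; simpl. f_equal; lia.
  - pose proof (qnorm4 D (a, b) Hd) as N4. cbv [fst snd] in N4.
    destruct (Z.eq_dec (2 * a + b * D) 0) as [H0|H0].
    + destruct (Z_le_gt_dec (- D) (4 * L - 1)) as [Hok|Hbad]; auto. exfalso.
      rewrite H0 in N4.
      assert (Hbb : b * b = 1) by nia.
      assert (HNL : qnorm D (a, b) = L) by nia.
      assert (Hsq : qmul D (a, b) (a, b) = qopp (L, 0)).
      { rewrite <- HNL. cbv [qmul qnorm qopp fst snd]. remember ((D - D * D) / 4) as c.
        f_equal. 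
        - assert (a * b * D = a * (b * D)) by ring. nia.
        - nia. }
      apply (lemX D l P Q (n + n) n); auto. lia.
      eapply ieq_trans. apply ipow_add.
      eapply ieq_trans. apply iprod_eq; apply Hp.
      eapply ieq_trans. apply pideal_mul. rewrite Hsq.
      eapply ieq_trans. apply pideal_opp. rewrite qpow_int. apply ieq_refl.
    + assert (b * b >= 1) by nia.
      assert ((2 * a + b * D) ^ 2 >= 1) by nia. nia.
Qed.

Theorem lemma5p2 (l : Z) (n : nat) (D f : Z) (P Q : ideal) :
  prime l -> (0 < n)%nat ->
  D < 0 -> is_disc D ->
  is_conductor D f -> Z.gcd f l = 1 ->
  is_prime_ideal D P -> is_prime_ideal D Q -> ~ ideal_eq P Q ->
  ideal_eq (pideal D (l, 0)) (iprod D P Q) ->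
  class_order D P n -> class_order D Q n ->
  Z.abs D <= 4 * l ^ (Z.of_nat n) - 1.
Proof.
  intros Hl Hn HD Hd _ _ HP HQ HPQ E [_ [CP _]] [_ [CQ _]].
  pose proof (prime_ge_2 l Hl) as Hl2.
  destruct (principal D _ Hd HD (ipow_ideal D P n) CP) as [p Hp].
  destruct (principal D _ Hd HD (ipow_ideal D Q n) CQ) as [s Hs].
  set (L := l ^ Z.of_nat n).
  assert (HL : 0 < L) by (apply Z.pow_pos_nonneg; lia).
  assert (PQ : ideal_eq (iprod D (ipow D P n) (ipow D Q n)) (pideal D (L, 0))).
  { eapply ieq_trans. apply ieq_sym, ipow_distr.
    eapply ieq_trans. apply ipow_eq. apply ieq_sym, E. eapply ieq_trans. apply ipow_pideal.
    rewrite qpow_int. apply ieq_refl. }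
  assert (Nm : qnorm D p * qnorm D s = L * L).
  { rewrite <- qnorm_mul. replace (L * L) with (qnorm D (L, 0)).
    2: { cbv [qnorm]. ring. }
    apply pideal_norm; auto. eapply ieq_trans. apply ieq_sym, pideal_mul.
    eapply ieq_trans. apply iprod_eq; apply ieq_sym; eauto. auto. }
  pose proof (qnorm_nonneg D p Hd HD). pose proof (qnorm_nonneg D s Hd HD).
  destruct (Z_le_gt_dec (qnorm D p) L).
  - eapply Lmain with (P := P) (Q := Q); eauto.
  - eapply Lmain with (P := Q) (Q := P); eauto.
    intros H1; apply HPQ, ieq_sym; auto.
    eapply ieq_trans. apply E. apply iprod_comm_eq.
    fold L. nia.
Qed.
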